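(* In the Call-by-Value probabilistic $\lambda$-calculus (as defined in the context), the full lifting $\Rrightarrow_E$ of $\rightsquigarrow_E$ is $\mathrm{obs}_{\mathrm{Nnf}}$-diamond: for all multi-distributions $\mathbf m,\mathbf n_1,\mathbf n_2$ with $\mathbf m\Rrightarrow_E\mathbf n_1$ and $\mathbf m\Rrightarrow_E\mathbf n_2$, either $\mathbf n_1=\mathbf n_2$ or there is $\mathbf s$ with $\mathbf n_1\Rrightarrow_E\mathbf s$ and $\mathbf n_2\Rrightarrow_E\mathbf s$; and moreover $\mathrm{obs}_{\mathrm{Nnf}}(\mathbf n_1)=\mathrm{obs}_{\mathrm{Nnf}}(\mathbf n_2)$.
   Context: Terms $\Lambda_\oplus$: $M::=x\mid\lambda x.M\mid MM\mid M\oplus M$; values $V::=x\mid\lambda x.M$. Contexts $C::=[\,]\mid MC\mid CM\mid\lambda x.C\mid C\oplus M\mid M\oplus C$; weak contexts $W::=[\,]\mid WM\mid MW$. A multi-distribution is a finite multiset $[p_iM_i]_{i\in I}$ with $p_i\in(0,1]$, $\sum_ip_i\le1$; $+$ is multiset union, $q\cdot[p_iM_i]_i=[(qp_i)M_i]_i$, $[M]:=[1M]$. $C[(\lambda x.M)V]\to_{\beta_v}[C[M\{V/x\}]]$; $W[M\oplus N]\to_\oplus[\tfrac12W[M],\tfrac12W[N]]$; $\to:=\to_{\beta_v}\cup\to_\oplus$; surface reduction $\to_s$ is $\to_\oplus$ together with the closure of $\beta_v$ under weak contexts. $M$ is $\to$-normal (surface-normal) if no $\mathbf m$ with $M\to\mathbf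 m$ ($M\to_s\mathbf m$); $\mathrm{Nnf}$ is the set of $\to$-normal terms. Let $\rightsquigarrow_U$ be the unbiased iteration of weak $\beta_v$-reduction on $\Lambda_\oplus$: if $M\to_wM'$ (closure of $\beta_v$ under weak contexts) then $M\rightsquigarrow_UM'$; if $M$ is $\to_w$-normal: $\lambda x.P\rightsquigarrow_U\lambda x.P'$, $PQ\rightsquigarrow_UP'Q$, $PQ\rightsquigarrow_UPQ'$, $P\oplus Q\rightsquigarrow_UP'\oplus Q$, $P\oplus Q\rightsquigarrow_UP\oplus Q'$ whenever $P\rightsquigarrow_UP'$, resp. $Q\rightsquigarrow_UQ'$. $\rightsquigarrow_E$: if $M$ is not surface-normal and $M\to_s\mathbf m$ then $M\rightsquigarrow_E\mathbf m$; if $M$ is surface-normal and $M\rightsquigarrow_UM'$ then $M\rightsquigarrow_E[M']$. The full lifting $\Rrightarrow_E$ is the least relation with: $[M]\Rrightarrow_E[M]$ if $M$ is $\to$-normal; $[M]\Rrightarrow_E\mathbf m$ if $M\rightsquigarrow_E\mathbf m$; $[p_iM_i]_{i\in I}\Rrightarrow_E\sum_ip_i\cdot\mathbf m_i$ if $[M_i]\Rrightarrow_E\mathbf m_i$ for all $i$. $\mathrm{obs}_{\mathrm{Nnf}}([p_iM_i]_{i\in I})$ is the subdistribution $\mu$ on $\mathrm{Nnf}$ with $\mu(N)=\sum_{i:\,M_i=N}p_i$. *)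

(* Defs.v *)
From Stdlib Require Import Reals List Permutation Arith.
Import ListNotations.
Open Scope R_scope.

(** Terms of Lambda_oplus (de Bruijn indices: terms up to alpha-equivalence). *)
Inductive term : Type :=
| Var (n : nat)
| Lam (t : term)
| App (t u : term)
| Choice (t u : term).

Definition term_eq_dec : forall t u : term, {t = u} + {t <> u}.
Proof. decide equality; apply Nat.eq_dec. Defined.

Definition is_value (t : term) : Prop :=
  match t with Var _ | Lam _ => True | _ => False end.

Fixpoint lift (k : nat) (t : term) : term :=
  match t with
  | Var n => if Nat.ltb n k then Var n else Var (S n)
  | Lam a => Lam (lift (S k) a)
  | App a b => App (lift k a) (lift k b)
  | Choice a b => Choice (lift k a) (lift k b)
  end.

Fixpoint subst (k : nat) (u : term) (t : term) : term :=
  match t with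
  | Var n => if Nat.eqb n k then u else if Nat.ltb n k then Var n else Var (pred n)
  | Lam a => Lam (subst (S k) (lift 0 u) a)
  | App a b => App (subst k u a) (subst k u b)
  | Choice a b => Choice (subst k u a) (subst k u b)
  end.

(** Multi-distributions: finite multisets [p_i M_i], represented as lists
    (multiset equality = permutation). *)
Definition mdist := list (R * term).

Definition is_mdist (m : mdist) : Prop :=
  Forall (fun pM => 0 < fst pM <= 1) m /\
  fold_right (fun pM acc => fst pM + acc) 0 m <= 1.

Definition scale (q : R) (m : mdist) : mdist :=
  map (fun pM => (q * fst pM, snd pM)) m.

Definition dirac (M : term) : mdist := [(1, M)].

Inductive beta_full : term -> term -> Prop :=
| bf_redex M V : is_value V -> beta_full (App (Lam M) V) (subst 0 V M)
| bf_appl M M' N : beta_full M M' -> beta_full (App M N) (App M' N)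
| bf_appr M N N' : beta_full N N' -> beta_full (App M N) (App M N')
| bf_lam M M' : beta_full M M' -> beta_full (Lam M) (Lam M')
| bf_choicel M M' N : beta_full M M' -> beta_full (Choice M N) (Choice M' N)
| bf_choicer M N N' : beta_full N N' -> beta_full (Choice M N) (Choice M N').

Inductive beta_weak : term -> term -> Prop :=
| bw_redex M V : is_value V -> beta_weak (App (Lam M) V) (subst 0 V M)
| bw_appl M M' N : beta_weak M M' -> beta_weak (App M N) (App M' N)
| bw_appr M N N' : beta_weak N N' -> beta_weak (App M N) (App M N').

(** oplus_step T A B : T = W[M (+) N], A = W[M], B = W[N]. *)
Inductive oplus_step : term -> term -> term -> Prop :=
| os_redex M N : oplus_step (Choice M N) M N
| os_appl T A B P : oplus_step T A B -> oplus_step (App T P) (App A P) (App B P)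
| os_appr T A B P : oplus_step T A B -> oplus_step (App P T) (App P A) (App P B).

Definition oplus_md (A B : term) : mdist := [(1/2, A); (1/2, B)].

Inductive step : term -> mdist -> Prop :=
| st_beta M M' : beta_full M M' -> step M (dirac M')
| st_oplus M A B : oplus_step M A B -> step M (oplus_md A B).

Inductive surf_step : term -> mdist -> Prop :=
| ss_beta M M' : beta_weak M M' -> surf_step M (dirac M')
| ss_oplus M A B : oplus_step M A B -> surf_step M (oplus_md A B).

Definition Nnf (M : term) : Prop := forall m, ~ step M m.
Definition surf_normal (M : term) : Prop := forall m, ~ surf_step M m.
Definition weak_normal (M : term) : Prop := forall M', ~ beta_weak M M'.

Inductive stepU : term -> term -> Prop :=
| U_weak M M' : beta_weak M M' -> stepU M M'
| U_lam P P' : weak_normal (Lam P) -> stepU P P' -> stepU (Lam P) (Lam P')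
| U_appl P P' Q : weak_normal (App P Q) -> stepU P P' -> stepU (App P Q) (App P' Q)
| U_appr P Q Q' : weak_normal (App P Q) -> stepU Q Q' -> stepU (App P Q) (App P Q')
| U_choicel P P' Q : weak_normal (Choice P Q) -> stepU P P' -> stepU (Choice P Q) (Choice P' Q)
| U_choicer P Q Q' : weak_normal (Choice P Q) -> stepU Q Q' -> stepU (Choice P Q) (Choice P Q').

Inductive stepE : term -> mdist -> Prop :=
| E_surf M m : ~ surf_normal M -> surf_step M m -> stepE M m
| E_U M M' : surf_normal M -> stepU M M' -> stepE M (dirac M').

(** [M] =>_E m  (the two base rules of the full lifting). *)
Definition lift1 (M : term) (m : mdist) : Prop :=
  (Nnf M /\ m = dirac M) \/ stepE M m.

(** Componentwise lifting, with result sum_i p_i . m_i (list concatenation). *)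
Inductive liftL : mdist -> mdist -> Prop :=
| liftL_nil : liftL [] []
| liftL_cons p M m l s : lift1 M m -> liftL l s -> liftL ((p, M) :: l) (scale p m ++ s).

(** The full lifting =>_E, on multisets (closed under permutation of the result). *)
Definition fullLiftE (m s : mdist) : Prop :=
  exists s', liftL m s' /\ Permutation s' s.

(** obs_Nnf m, as a function on terms; it is meant to be read on Nnf only. *)
Definition obs_Nnf (m : mdist) (N : term) : R :=
  fold_right (fun pM acc =>
    (if term_eq_dec (snd pM) N then fst pM else 0) + acc) 0 m.

(* Main.v *)
Require Import Defs.
From Stdlib Require Import Reals List Permutation Classical.
Import ListNotations.
Open Scope R_scope.

Lemma bw_bf : forall M M', beta_weak M M' -> beta_full M M'.
Proof. induction 1; [apply bf_redex | apply bf_appl | apply bf_appr]; auto. Qed.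

Lemma U_bf : forall M M', stepU M M' -> beta_full M M'.
Proof.
  induction 1; [apply bw_bf | apply bf_lam | apply bf_appl | apply bf_appr
    | apply bf_choicel | apply bf_choicer]; auto.
Qed.

Lemma step_notNnf : forall M m, step M m -> ~ Nnf M.
Proof. unfold Nnf; intros M m H H'; exact (H' _ H). Qed.

Lemma surf_step_step : forall M m, surf_step M m -> step M m.
Proof. intros M m H; destruct H; [apply st_beta, bw_bf | apply st_oplus]; auto. Qed.

Lemma stepE_step : forall M m, stepE M m -> exists m', step M m'.
Proof.
  intros M m H; destruct H.
  - exists m; apply surf_step_step; auto.
  - exists (dirac M'); apply st_beta, U_bf; auto.
Qed.

Lemma wn_lam : forall P, weak_normal (Lam P).
Proof. intros P M' H; inversion H. Qed.
Lemma wn_choice : forall P Q, weak_normal (Choice P Q).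
Proof. intros P Q M' H; inversion H. Qed.

Lemma wn_app_inv : forall P Q, weak_normal (App P Q) ->
  weak_normal P /\ weak_normal Q /\ (forall X, P = Lam X -> ~ is_value Q).
Proof.
  intros P Q Hwn; split; [|split].
  - intros P' H; apply (Hwn (App P' Q)); apply bw_appl; auto.
  - intros Q' H; apply (Hwn (App P Q')); apply bw_appr; auto.
  - intros X -> HV; apply (Hwn (subst 0 Q X)); apply bw_redex; auto.
Qed.

Lemma wn_app : forall P Q, weak_normal P -> weak_normal Q ->
  (forall X, P = Lam X -> ~ is_value Q) -> weak_normal (App P Q).
Proof.
  intros P Q HP HQ Hl M' H; inversion H; subst.
  - eapply Hl; eauto.
  - eapply HP; eauto.
  - eapply HQ; eauto.
Qed.

Lemma U_shape : forall M M', stepU M M' -> weak_normal M ->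
  weak_normal M' /\ (forall Y, M' = Lam Y -> exists X, M = Lam X) /\ (is_value M' -> is_value M).
Proof.
  induction 1; intros Hwn.
  - exfalso; eapply Hwn; eauto.
  - split; [apply wn_lam | split; eauto].
  - destruct (wn_app_inv _ _ Hwn) as (HP & HQ & Hl).
    destruct (IHstepU HP) as (HP' & HL' & _).
    split; [|split; [intros Y E; discriminate | simpl; tauto]].
    apply wn_app; auto. intros X E. destruct (HL' X E) as [X0 ->]. exact (Hl X0 eq_refl).
  - destruct (wn_app_inv _ _ Hwn) as (HP & HQ & Hl).
    destruct (IHstepU HQ) as (HQ' & _ & HV').
    split; [|split; [intros Y E; discriminate | simpl; tauto]].
    apply wn_app; auto. intros X E HV. exact (Hl X E (HV' HV)).
  - split; [apply wn_choice | split; [intros Y E; discriminate | simpl; tauto]].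
  - split; [apply wn_choice | split; [intros Y E; discriminate | simpl; tauto]].
Qed.

Lemma sn_wn : forall M, surf_normal M -> weak_normal M.
Proof. intros M H M' Hb; apply (H (dirac M')); apply ss_beta; auto. Qed.

Lemma sn_noplus : forall M A B, surf_normal M -> oplus_step M A B -> False.
Proof. intros M A B H Ho; apply (H (oplus_md A B)); apply ss_oplus; auto. Qed.

Lemma sn_app_inv : forall P Q, surf_normal (App P Q) -> surf_normal P /\ surf_normal Q.
Proof.
  intros P Q H; split; intros m Hs; inversion Hs; subst.
  - apply (H (dirac (App M' Q))); apply ss_beta; apply bw_appl; auto.
  - apply (H (oplus_md (App A Q) (App B Q))); apply ss_oplus; apply os_appl; auto.
  - apply (H (dirac (App P M'))); apply ss_beta; apply bw_appr; auto.
  - apply (H (oplus_md (App P A) (App P B))); apply ss_oplus; apply os_appr; auto.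
Qed.

Lemma sn_intro : forall M, weak_normal M -> (forall A B, ~ oplus_step M A B) -> surf_normal M.
Proof. intros M Hw Ho m Hs; inversion Hs; subst; [eapply Hw | eapply Ho]; eauto. Qed.

Lemma U_noplus : forall M M', stepU M M' -> surf_normal M -> forall A B, ~ oplus_step M' A B.
Proof.
  induction 1; intros Hsn A B Ho.
  - apply (Hsn (dirac M')); apply ss_beta; auto.
  - inversion Ho.
  - destruct (sn_app_inv _ _ Hsn) as [S1 S2]. inversion Ho; subst.
    + exact (IHstepU S1 _ _ ltac:(eassumption)).
    + eapply sn_noplus; [exact S2 | eassumption].
  - destruct (sn_app_inv _ _ Hsn) as [S1 S2]. inversion Ho; subst.
    + eapply sn_noplus; [exact S1 | eassumption].
    + exact (IHstepU S2 _ _ ltac:(eassumption)).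
  - apply (Hsn (oplus_md P Q)); apply ss_oplus; apply os_redex.
  - apply (Hsn (oplus_md P Q)); apply ss_oplus; apply os_redex.
Qed.

Lemma U_sn : forall M M', stepU M M' -> surf_normal M -> surf_normal M'.
Proof.
  intros M M' H Hs; apply sn_intro.
  - apply (U_shape _ _ H (sn_wn _ Hs)).
  - eapply U_noplus; eauto.
Qed.

Lemma val_nbw : forall V V', is_value V -> beta_weak V V' -> False.
Proof. intros V V' HV H; destruct V; simpl in HV; try contradiction; inversion H. Qed.
Lemma val_nos : forall V A B, is_value V -> oplus_step V A B -> False.
Proof. intros V A B HV H; destruct V; simpl in HV; try contradiction; inversion H. Qed.

Lemma bw_diamond : forall M M1, beta_weak M M1 -> forall M2, beta_weak M M2 ->
  M1 = M2 \/ exists M3, beta_weak M1 M3 /\ beta_weak M2 M3.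
Proof.
  induction 1; intros M2 H2; inversion H2; subst.
  - left; reflexivity.
  - match goal with Hx : beta_weak (Lam _) _ |- _ => inversion Hx end.
  - exfalso; eapply val_nbw; eauto.
  - inversion H.
  - destruct (IHbeta_weak _ H4) as [<- | [M3 [A1 A2]]]; [left; reflexivity|].
    right; exists (App M3 N); split; apply bw_appl; auto.
  - right; eexists; split; [apply bw_appr | apply bw_appl]; eauto.
  - exfalso; eapply val_nbw; eauto.
  - right; eexists; split; [apply bw_appl | apply bw_appr]; eauto.
  - destruct (IHbeta_weak _ H4) as [<- | [M3 [A1 A2]]]; [left; reflexivity|].
    right; exists (App M M3); split; apply bw_appr; auto.
Qed.

Lemma bw_oplus : forall M M1, beta_weak M M1 -> forall A B, oplus_step M A B ->
  exists A' B', oplus_step M1 A' B' /\ beta_weak A A' /\ beta_weak B B'.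
Proof.
  induction 1; intros A B Ho; inversion Ho; subst.
  - match goal with Hx : oplus_step (Lam _) _ _ |- _ => inversion Hx end.
  - exfalso; eapply val_nos; eauto.
  - destruct (IHbeta_weak _ _ H4) as (A' & B' & O & X & Y).
    exists (App A' N), (App B' N); split; [apply os_appl | split; apply bw_appl]; auto.
  - exists (App M' A0), (App M' B0); split; [apply os_appr | split; apply bw_appl]; auto.
  - exists (App A0 N'), (App B0 N'); split; [apply os_appl | split; apply bw_appr]; auto.
  - match goal with Hx : oplus_step N _ _ |- _ =>
      destruct (IHbeta_weak _ _ Hx) as (A' & B' & O & X & Y) end.
    exists (App M A'), (App M B'); split; [apply os_appr | split; apply bw_appr]; auto.
Qed.

Lemma oplus_diamond : forall M A1 B1, oplus_step M A1 B1 -> forall A2 B2, oplus_step M A2 B2 ->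
  (A1 = A2 /\ B1 = B2) \/ exists C D E F, oplus_step A1 C D /\ oplus_step B1 E F /\
     oplus_step A2 C E /\ oplus_step B2 D F.
Proof.
  induction 1; intros A2 B2 H2; inversion H2; subst.
  - left; auto.
  - destruct (IHoplus_step _ _ H5) as [[<- <-] | (C & D & E & F & X1 & X2 & X3 & X4)];
      [left; auto|].
    right; exists (App C P), (App D P), (App E P), (App F P);
      repeat split; apply os_appl; auto.
  - right; exists (App A A0), (App A B0), (App B A0), (App B B0);
      repeat split; [apply os_appr | apply os_appr | apply os_appl | apply os_appl]; auto.
  - right; exists (App A0 A), (App B0 A), (App A0 B), (App B0 B);
      repeat split; [apply os_appl | apply os_appl | apply os_appr | apply os_appr]; auto.
  - destruct (IHoplus_step _ _ H5) as [[<- <-] | (C & D & E & F & X1 & X2 & X3 & X4)];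
      [left; auto|].
    right; exists (App P C), (App P D), (App P E), (App P F);
      repeat split; apply os_appr; auto.
Qed.

Lemma U_diamond : forall M M1, stepU M M1 -> forall M2, stepU M M2 ->
  M1 = M2 \/ exists M3, stepU M1 M3 /\ stepU M2 M3.
Proof.
  induction 1 as [M M1 Hb | P P' Hw H IH | P P' Q Hw H IH | P Q Q' Hw H IH
                 | P P' Q Hw H IH | P Q Q' Hw H IH];
    intros M2 H2.
  - destruct H2 as [M M2 Hb2 | ? ? Hw2 | ? ? ? Hw2 | ? ? ? Hw2 | ? ? ? Hw2 | ? ? ? Hw2];
      try (exfalso; eapply Hw2; eauto; fail).
    destruct (bw_diamond _ _ Hb _ Hb2) as [<- | [M3 [X Y]]]; [left; auto|].
    right; exists M3; split; apply U_weak; auto.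
  - inversion H2; subst; [exfalso; eapply Hw; eauto|].
    destruct (IH _ ltac:(match goal with Hx : stepU P _ |- _ => exact Hx end)) as [<- | [M3 [X Y]]]; [left; auto|].
    right; exists (Lam M3); split; apply U_lam; auto using wn_lam.
  - pose proof (proj1 (U_shape _ _ (U_appl _ _ _ Hw H) Hw)) as W1.
    inversion H2; subst; [exfalso; eapply Hw; eauto| |].
    + destruct (IH _ ltac:(match goal with Hx : stepU _ _ |- _ => exact Hx end)) as [<- | [M3 [X Y]]]; [left; auto|].
      pose proof (proj1 (U_shape _ _ H2 Hw)) as W2.
      right; exists (App M3 Q); split; apply U_appl; auto.
    + pose proof (proj1 (U_shape _ _ H2 Hw)) as W2.
      right; exists (App P' Q'); split; [apply U_appr | apply U_appl]; auto.
  - pose proof (proj1 (U_shape _ _ (U_appr _ _ _ Hw H) Hw)) as W1.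
    inversion H2; subst; [exfalso; eapply Hw; eauto| |].
    + pose proof (proj1 (U_shape _ _ H2 Hw)) as W2.
      right; exists (App P' Q'); split; [apply U_appl | apply U_appr]; auto.
    + destruct (IH _ ltac:(match goal with Hx : stepU _ _ |- _ => exact Hx end)) as [<- | [M3 [X Y]]]; [left; auto|].
      pose proof (proj1 (U_shape _ _ H2 Hw)) as W2.
      right; exists (App P M3); split; apply U_appr; auto.
  - inversion H2; subst; [exfalso; eapply Hw; eauto| |].
    + destruct (IH _ ltac:(match goal with Hx : stepU _ _ |- _ => exact Hx end)) as [<- | [M3 [X Y]]]; [left; auto|].
      right; exists (Choice M3 Q); split; apply U_choicel; auto using wn_choice.
    + right; exists (Choice P' Q'); split; [apply U_choicer | apply U_choicel]; auto using wn_choice.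
  - inversion H2; subst; [exfalso; eapply Hw; eauto| |].
    + right; exists (Choice P' Q'); split; [apply U_choicel | apply U_choicer]; auto using wn_choice.
    + destruct (IH _ ltac:(match goal with Hx : stepU _ _ |- _ => exact Hx end)) as [<- | [M3 [X Y]]]; [left; auto|].
      right; exists (Choice P M3); split; apply U_choicer; auto using wn_choice.
Qed.

Lemma scale_app : forall q a b, scale q (a ++ b) = scale q a ++ scale q b.
Proof. intros; unfold scale; apply map_app. Qed.

Lemma scale_scale : forall q p m, scale q (scale p m) = scale (q * p) m.
Proof.
  intros; unfold scale; rewrite map_map; apply map_ext; intros [x y]; simpl.
  rewrite Rmult_assoc; reflexivity.
Qed.

Lemma liftL_app : forall a sa, liftL a sa -> forall b sb, liftL b sb -> liftL (a ++ b) (sa ++ sb).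
Proof.
  induction 1; intros b sb Hb; simpl; auto.
  rewrite <- app_assoc; constructor; auto.
Qed.

Lemma liftL_scale : forall a s q, liftL a s -> liftL (scale q a) (scale q s).
Proof.
  induction 1; simpl; [constructor|].
  rewrite scale_app, scale_scale. constructor; auto.
Qed.

Lemma liftL_perm : forall a b, Permutation a b -> forall s, liftL a s ->
  exists s', liftL b s' /\ Permutation s s'.
Proof.
  induction 1; intros s Hs.
  - exists s; split; auto.
  - destruct x as [p M]; inversion Hs; subst.
    destruct (IHPermutation _ H5) as [s' [X Y]].
    exists (scale p m ++ s'); split; [constructor; auto | apply Permutation_app_head; auto].
  - destruct x as [p M]; destruct y as [q N].
    inversion Hs; subst. inversion H4; subst.
    exists (scale p m0 ++ scale q m ++ s); split; [constructor; auto; constructor; auto|].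
    rewrite !app_assoc. apply Permutation_app_tail. apply Permutation_app_comm.
  - destruct (IHPermutation1 _ Hs) as [s1 [X1 Y1]].
    destruct (IHPermutation2 _ X1) as [s2 [X2 Y2]].
    exists s2; split; auto. eapply perm_trans; eauto.
Qed.

Lemma fLE_app : forall a s b t, fullLiftE a s -> fullLiftE b t -> fullLiftE (a ++ b) (s ++ t).
Proof.
  intros a s b t [s' [H1 P1]] [t' [H2 P2]].
  exists (s' ++ t'); split; [apply liftL_app; auto | apply Permutation_app; auto].
Qed.

Lemma fLE_scale : forall a s q, fullLiftE a s -> fullLiftE (scale q a) (scale q s).
Proof.
  intros a s q [s' [H1 P1]]. exists (scale q s'); split; [apply liftL_scale; auto|].
  unfold scale; apply Permutation_map; auto.
Qed.

Lemma fLE_perm : forall a b s, Permutation a b -> fullLiftE a s -> fullLiftE b s.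
Proof.
  intros a b s P [s' [H1 P1]].
  destruct (liftL_perm _ _ P _ H1) as [s'' [X Y]].
  exists s''; split; auto. eapply perm_trans; [apply Permutation_sym; eauto | auto].
Qed.

Lemma fLE_of : forall a s' s, liftL a s' -> Permutation s' s -> fullLiftE a s.
Proof. intros; exists s'; auto. Qed.

Lemma fLE1 : forall p M m, lift1 M m -> fullLiftE [(p, M)] (scale p m).
Proof.
  intros p M m H. apply fLE_of with (scale p m ++ []).
  - constructor; auto; constructor.
  - rewrite app_nil_r; apply Permutation_refl.
Qed.

Lemma bf_U : forall M M', beta_full M M' -> exists M'', stepU M M''.
Proof.
  induction 1.
  - exists (subst 0 V M); apply U_weak; apply bw_redex; auto.
  - destruct IHbeta_full as [P'' HP].
    destruct (classic (weak_normal (App M N))) as [W|W].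
    + exists (App P'' N); apply U_appl; auto.
    + unfold weak_normal in W; apply not_all_not_ex in W; destruct W as [X HX].
      exists X; apply U_weak; auto.
  - destruct IHbeta_full as [P'' HP].
    destruct (classic (weak_normal (App M N))) as [W|W].
    + exists (App M P''); apply U_appr; auto.
    + unfold weak_normal in W; apply not_all_not_ex in W; destruct W as [X HX].
      exists X; apply U_weak; auto.
  - destruct IHbeta_full as [P'' HP]. exists (Lam P''); apply U_lam; auto using wn_lam.
  - destruct IHbeta_full as [P'' HP]. exists (Choice P'' N); apply U_choicel; auto using wn_choice.
  - destruct IHbeta_full as [P'' HP]. exists (Choice M P''); apply U_choicer; auto using wn_choice.
Qed.

Lemma lift1_total : forall M, exists m, lift1 M m.
Proof.
  intros M. destruct (classic (Nnf M)) as [HN|HN].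
  - exists (dirac M); left; auto.
  - unfold Nnf in HN; apply not_all_not_ex in HN; destruct HN as [m Hs].
    destruct (classic (surf_normal M)) as [S|S].
    + inversion Hs; subst.
      * destruct (bf_U _ _ H) as [M'' HU]. exists (dirac M''); right; apply E_U; auto.
      * exfalso; eapply sn_noplus; [exact S | eassumption].
    + pose proof S as S0.
      unfold surf_normal in S; apply not_all_not_ex in S; destruct S as [m' Hs'].
      exists m'; right; apply E_surf; auto.
Qed.

Lemma fLE_total : forall a, exists s, fullLiftE a s.
Proof.
  induction a as [|[p M] a IH].
  - exists []; exists []; split; constructor.
  - destruct (lift1_total M) as [m Hm]; destruct IH as [s [s' [Hl Hp]]].
    exists (scale p m ++ s); exists (scale p m ++ s'); split;
      [constructor; auto | apply Permutation_app_head; auto].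
Qed.

Definition nn (pM : R * term) : Prop := ~ Nnf (snd pM).

Definition joinable (m1 m2 : mdist) : Prop :=
  m1 = m2 \/ (Forall nn m1 /\ Forall nn m2 /\ exists s, fullLiftE m1 s /\ fullLiftE m2 s).

Lemma joinable_sym : forall m1 m2, joinable m1 m2 -> joinable m2 m1.
Proof.
  unfold joinable; intros m1 m2 [E | (F1 & F2 & s & S1 & S2)]; [left; auto | right; eauto 6].
Qed.

Lemma lift_surf : forall M m, surf_step M m -> lift1 M m.
Proof. intros M m H; right; apply E_surf; [intro Hsn; exact (Hsn m H) | exact H]. Qed.

Lemma surf_nn : forall p M m, surf_step M m -> nn (p, M).
Proof. unfold nn; simpl; intros p M m H; apply step_notNnf with m; apply surf_step_step; auto. Qed.

Lemma bo_join : forall M M1 A B, beta_weak M M1 -> oplus_step M A B ->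
  joinable (dirac M1) (oplus_md A B).
Proof.
  intros M M1 A B Hb Ho.
  destruct (bw_oplus _ _ Hb _ _ Ho) as (A' & B' & O & X & Y).
  right; split; [|split].
  - constructor; [apply surf_nn with (oplus_md A' B'); apply ss_oplus; auto | constructor].
  - constructor; [apply surf_nn with (dirac A'); apply ss_beta; auto|].
    constructor; [apply surf_nn with (dirac B'); apply ss_beta; auto | constructor].
  - exists (scale 1 (oplus_md A' B')); split.
    + apply fLE1. apply lift_surf; apply ss_oplus; auto.
    + apply fLE_of with (scale (1/2) (dirac A') ++ (scale (1/2) (dirac B') ++ [])).
      * constructor; [apply lift_surf; apply ss_beta; auto|].
        constructor; [apply lift_surf; apply ss_beta; auto| constructor].
      * unfold scale, dirac, oplus_md; cbn [map app fst snd].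
        rewrite !Rmult_1_l, !Rmult_1_r; apply Permutation_refl.
Qed.

Lemma surf_join : forall M m1 m2, surf_step M m1 -> surf_step M m2 -> joinable m1 m2.
Proof.
  intros M m1 m2 H1 H2.
  destruct H1 as [M M1 Hb1 | M A1 B1 Ho1].
  - inversion H2 as [M0 M2 Hb2 | M0 A B Ho2]; subst.
    + destruct (bw_diamond _ _ Hb1 _ Hb2) as [<- | [M3 [X Y]]]; [left; auto|].
      right; split; [|split].
      * constructor; [apply surf_nn with (dirac M3); apply ss_beta; auto | constructor].
      * constructor; [apply surf_nn with (dirac M3); apply ss_beta; auto | constructor].
      * exists (scale 1 (dirac M3)); split; apply fLE1; apply lift_surf; apply ss_beta; auto.
    + eapply bo_join; eauto.
  - inversion H2 as [M0 M2 Hb2 | M0 A2 B2 Ho2]; subst.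
    + apply joinable_sym; eapply bo_join; eauto.
    + destruct (oplus_diamond _ _ _ Ho1 _ _ Ho2) as [[<- <-] | (C & D & E & F & X1 & X2 & X3 & X4)];
        [left; auto|].
      right; split; [|split].
      * constructor; [apply surf_nn with (oplus_md C D); apply ss_oplus; auto|].
        constructor; [apply surf_nn with (oplus_md E F); apply ss_oplus; auto | constructor].
      * constructor; [apply surf_nn with (oplus_md C E); apply ss_oplus; auto|].
        constructor; [apply surf_nn with (oplus_md D F); apply ss_oplus; auto | constructor].
      * exists (scale (1/2) (oplus_md C D) ++ scale (1/2) (oplus_md E F) ++ []); split.
        -- apply fLE_of with (scale (1/2) (oplus_md C D) ++ scale (1/2) (oplus_md E F) ++ []);
             [| apply Permutation_refl].
           constructor; [apply lift_surf; apply ss_oplus; auto|].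
           constructor; [apply lift_surf; apply ss_oplus; auto| constructor].
        -- apply fLE_of with (scale (1/2) (oplus_md C E) ++ scale (1/2) (oplus_md D F) ++ []).
           ++ constructor; [apply lift_surf; apply ss_oplus; auto|].
              constructor; [apply lift_surf; apply ss_oplus; auto| constructor].
           ++ unfold scale, oplus_md; cbn [map app fst snd].
              apply perm_skip, perm_swap.
Qed.

Lemma U_join : forall M M1 M2, surf_normal M -> stepU M M1 -> stepU M M2 ->
  joinable (dirac M1) (dirac M2).
Proof.
  intros M M1 M2 S H1 H2.
  destruct (U_diamond _ _ H1 _ H2) as [<- | [M3 [X Y]]]; [left; auto|].
  right; split; [|split].
  - constructor; [|constructor]. unfold nn; simpl.
    apply step_notNnf with (dirac M3); apply st_beta, U_bf; auto.
  - constructor; [|constructor]. unfold nn; simpl.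
    apply step_notNnf with (dirac M3); apply st_beta, U_bf; auto.
  - exists (scale 1 (dirac M3)); split; apply fLE1; right; apply E_U; auto;
      eapply U_sn; eauto.
Qed.

Lemma local : forall M m1 m2, lift1 M m1 -> lift1 M m2 -> joinable m1 m2.
Proof.
  intros M m1 m2 [[HN ->] | H1] [[HN' ->] | H2].
  - left; auto.
  - exfalso. destruct (stepE_step _ _ H2) as [m' Hs]. exact (HN _ Hs).
  - exfalso. destruct (stepE_step _ _ H1) as [m' Hs]. exact (HN' _ Hs).
  - destruct H1 as [M m1 S1 Hs1 | M M1 S1 HU1];
      inversion H2 as [M0 m0 S2 Hs2 | M0 M2 S2 HU2]; subst.
    + eapply surf_join; eauto.
    + contradiction.
    + contradiction.
    + eapply U_join; eauto.
Qed.

Lemma obs_app : forall a b N, obs_Nnf (a ++ b) N = obs_Nnf a N + obs_Nnf b N.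
Proof. induction a; intros; simpl; [ring | rewrite IHa; ring]. Qed.

Lemma obs_scale : forall q a N, obs_Nnf (scale q a) N = q * obs_Nnf a N.
Proof.
  induction a as [|[p M] a IH]; intros; simpl; [ring|].
  rewrite IH; destruct term_eq_dec; ring.
Qed.

Lemma obs_perm : forall a b N, Permutation a b -> obs_Nnf a N = obs_Nnf b N.
Proof.
  intros a b N P; induction P; simpl; auto.
  - rewrite IHP; auto.
  - ring.
  - congruence.
Qed.

Lemma obs_nn : forall a N, Forall nn a -> Nnf N -> obs_Nnf a N = 0.
Proof.
  intros a N F HN; induction F; simpl; auto.
  destruct term_eq_dec as [E|E].
  - exfalso; apply H; rewrite E; auto.
  - rewrite IHF; ring.
Qed.

Lemma global : forall m a, liftL m a -> forall b, liftL m b ->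
  (a = b \/ exists s, fullLiftE a s /\ fullLiftE b s) /\
  (forall N, Nnf N -> obs_Nnf a N = obs_Nnf b N).
Proof.
  induction 1 as [| p M m1 l a' H1 Hl IH]; intros b Hb; inversion Hb; subst.
  - split; [left; auto | reflexivity].
  - rename m into m0, s into s0.
    pose proof (local _ _ _ H1 H4) as J. destruct (IH _ H5) as [J' O'].
    split.

    + destruct (classic (scale p m1 ++ a' = scale p m0 ++ s0)) as [E|NE]; [left; auto| right].
      assert (C1 : exists s, fullLiftE m1 s /\ fullLiftE m0 s).
      { destruct J as [<- | (_ & _ & C)]; [destruct (fLE_total m1) as [s Hs]; eauto | auto]. }
      assert (C2 : exists s, fullLiftE a' s /\ fullLiftE s0 s).
      { destruct J' as [<- | C]; [destruct (fLE_total a') as [s Hs]; eauto | auto]. }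
      destruct C1 as [s1 [X1 Y1]], C2 as [s2 [X2 Y2]].
      exists (scale p s1 ++ s2); split; apply fLE_app; try apply fLE_scale; auto.
    + intros N HN. rewrite !obs_app, !obs_scale, (O' N HN).
      destruct J as [<- | (F1 & F2 & _)]; [reflexivity|].
      rewrite (obs_nn _ _ F1 HN), (obs_nn _ _ F2 HN); reflexivity.
Qed.

Theorem mainTheorem7 :
  forall m n1 n2 : mdist,
    is_mdist m ->
    fullLiftE m n1 -> fullLiftE m n2 ->
    (Permutation n1 n2 \/ exists s, fullLiftE n1 s /\ fullLiftE n2 s) /\
    (forall N : term, Nnf N -> obs_Nnf n1 N = obs_Nnf n2 N).
Proof.
  intros m n1 n2 _ [a [Ha Pa]] [b [Hb Pb]].
  destruct (global _ _ Ha _ Hb) as [J O]. split.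
  - destruct J as [<- | [s [S1 S2]]].
    + left; eapply perm_trans; [apply Permutation_sym, Pa | exact Pb].
    + right; exists s; split; eapply fLE_perm; eauto.
  - intros N HN. rewrite <- (obs_perm _ _ N Pa), <- (obs_perm _ _ N Pb). apply O; auto.
Qed.
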